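(* Let $n\ge 2$ be an integer and $A\subseteq L_n$. The space $(X_n,\tau(A))$ is locally compact if and only if $A=L_n$ (i.e. $\tau(A)$ is the Euclidean topology on $X_n$).
   Context: For $\overline{x},\overline{a}\in\mathbb R^n$ let $|\overline{x}-\overline{a}|$ be the Euclidean distance and $B(\overline{a},\epsilon)=\{\overline{x}\in\mathbb R^n:|\overline{x}-\overline{a}|<\epsilon\}$. Let $P_n=\{\overline{x}\in\mathbb R^n: x_n>0\}$, $L_n=\{\overline{x}\in\mathbb R^n: x_n=0\}$, $X_n=P_n\cup L_n$. For $\overline{a}\in L_n$ and $\epsilon>0$ put $\overline{a(\epsilon)}=(a_1,\dots,a_{n-1},\epsilon)$ and $\tilde B(\overline{a},\epsilon)=\{\overline{a}\}\cup B(\overline{a(\epsilon)},\epsilon)$. For $A\subseteq L_n$, the topology $\tau(A)$ on $X_n$ is generated by the local bases: at $\overline{a}\in P_n$, the sets $B(\overline{a},\epsilon)$ with $0<\epsilon<a_n$; at $\overline{a}\in A$, the sets $B(\overline{a},\epsilon)\cap X_n$ with $\epsilon>0$; at $\overline{a}\in L_n\setminus A$, the sets $\tilde B(\overline{a},\epsilon)$ with $\epsilon>0$. Note $\tau(L_n)$ is the Euclidean topology on $X_n$. *)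

(* Defs.v *)
From HB Require Import structures.
From mathcomp Require Import all_boot all_order all_algebra.
From mathcomp Require Import boolp classical_sets reals.
From Stdlib Require List.
Set Implicit Arguments. Unset Strict Implicit. Unset Printing Implicit Defensive.
Import Order.TTheory GRing.Theory Num.Theory.
Local Open Scope ring_scope.
Local Open Scope classical_set_scope.

Section Defs.
Variables (R : realType) (n : nat).

Definition pt := 'I_n -> R.

(* the n-th (last) coordinate x_n (0 when n = 0, never used) *)
Definition lastc (x : pt) : R :=
  match n return ('I_n -> R) -> R with
  | 0 => fun _ => 0
  | m.+1 => fun x => x ord_max
  end x.

Definition edist (x a : pt) : R := Num.sqrt (\sum_(i < n) (x i - a i) ^+ 2).

Definition eball (a : pt) (e : R) : set pt := [set x | edist x a < e].

Definition Pn : set pt := [set x | 0 < lastc x].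
Definition Ln : set pt := [set x | lastc x = 0].
Definition Xn : set pt := Pn `|` Ln.

Definition shift_up (a : pt) (e : R) : pt :=
  fun i => if val i == n.-1 then e else a i.

Definition tball (a : pt) (e : R) : set pt := [set a] `|` eball (shift_up a e) e.

Definition basic_nbhd (A : set pt) (a : pt) (B : set pt) : Prop :=
  [\/ Pn a /\ exists e, 0 < e /\ e < lastc a /\ B = eball a e,
      A a /\ exists e, 0 < e /\ B = eball a e `&` Xn
    | Ln a /\ ~ A a /\ exists e, 0 < e /\ B = tball a e].

Definition tau_open (A : set pt) (U : set pt) : Prop :=
  U `<=` Xn /\ forall a, U a -> exists B, basic_nbhd A a B /\ B `<=` U.

Definition tau_compact (A : set pt) (K : set pt) : Prop :=
  K `<=` Xn /\
  forall C : set (set pt), (forall U, C U -> tau_open A U) ->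
    (forall x, K x -> exists2 U, C U & U x) ->
    exists s : seq (set pt), (forall U, List.In U s -> C U) /\
      (forall x, K x -> exists2 U, List.In U s & U x).

Definition tau_locally_compact (A : set pt) : Prop :=
  forall x, Xn x -> exists U K, [/\ tau_open A U, U x, U `<=` K & tau_compact A K].

End Defs.

(* Main.v *)
Require Import Defs.
From mathcomp Require Import all_boot all_order all_algebra.
From mathcomp Require Import boolp classical_sets reals.
From mathcomp Require Import finmap.
From mathcomp Require Import all_classical all_reals all_analysis.
From mathcomp Require Import ring lra.
From Stdlib Require List.
Import Order.TTheory GRing.Theory Num.Theory numFieldNormedType.Exports.
Local Open Scope ring_scope.
Local Open Scope classical_set_scope.

Section Aux.
Variables (R : realType) (m : nat).
Local Notation N := m.+2.
Local Notation pt := (Defs.pt R N).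

Definition qd (x y : pt) : R := \sum_(i < N) (x i - y i) ^+ 2.

Lemma qd_ge0 x y : 0 <= qd x y.
Proof. by apply: sumr_ge0 => i _; apply: sqr_ge0. Qed.

Lemma edist_lt x y d : 0 < d -> (Defs.edist x y < d) = (qd x y < d ^+ 2).
Proof.
move=> d0; rewrite /edist -/(qd x y).
by rewrite -(ltr_sqrt (qd x y)) ?exprn_gt0 // sqrtr_sqr gtr0_norm.
Qed.

Lemma coord_sq x y i : (x i - y i) ^+ 2 <= qd x y.
Proof.
rewrite /qd (bigD1 i) //= lerDl; by apply: sumr_ge0 => j _; apply: sqr_ge0.
Qed.

Lemma coord_lt x y i d : 0 < d -> qd x y < d ^+ 2 -> `|x i - y i| < d.
Proof.
move=> d0 h; have := le_lt_trans (coord_sq x y i) h.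
by rewrite -real_normK ?num_real // ltr_pXn2r // ?nnegrE // ltW.
Qed.

Lemma lastcE (x : pt) : lastc x = x ord_max. Proof. by []. Qed.

Lemma qd_shift a r x : a ord_max = 0 ->
  qd x (shift_up a r) = qd x a - 2 * r * x ord_max + r ^+ 2.
Proof.
move=> a0; rewrite /qd [in LHS](bigD1 ord_max) //= [in RHS](bigD1 ord_max) //=.
rewrite /shift_up /= eqxx a0.
rewrite (eq_bigr (fun i => (x i - a i) ^+ 2)); last first.
  move=> i /negbTE ne; case: ifP => // /eqP h.
  by move: ne; rewrite (_ : i = ord_max) ?eqxx //; apply: val_inj.
by rewrite subr0; ring.
Qed.

Lemma eball_shiftE a r x : a ord_max = 0 -> 0 < r ->
  eball (shift_up a r) r x <-> qd x a < 2 * r * x ord_max.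
Proof.
move=> a0 r0; rewrite /eball /= edist_lt // -/(qd x _) qd_shift //.
by split => h; lra.
Qed.

Definition hdef (e : R) (a y : pt) := qd y a - e * y ord_max.

Lemma qd_split y x a : qd y a = qd y x + \sum_(i < N) (2 * ((y i - x i) * (x i - a i))) + qd x a.
Proof.
rewrite /qd -!big_split /=; apply: eq_bigr => i _; ring.
Qed.

Lemma cross_bound (y x a : pt) (t : R) : 0 < t ->
  t * `|\sum_(i < N) (2 * ((y i - x i) * (x i - a i)))| <= qd y x + t ^+ 2 * qd x a.
Proof.
move=> t0; rewrite /qd mulr_sumr -big_split /=.
have h1 : t * \sum_(i < N) (2 * ((y i - x i) * (x i - a i))) <=
   \sum_(i < N) ((y i - x i) ^+ 2 + t ^+ 2 * (x i - a i) ^+ 2).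
  rewrite mulr_sumr; apply: ler_sum => i _.
  have := sqr_ge0 ((y i - x i) - t * (x i - a i)); nra.
have h2 : - (t * \sum_(i < N) (2 * ((y i - x i) * (x i - a i)))) <=
   \sum_(i < N) ((y i - x i) ^+ 2 + t ^+ 2 * (x i - a i) ^+ 2).
  rewrite mulr_sumr -sumrN; apply: ler_sum => i _.
  have := sqr_ge0 ((y i - x i) + t * (x i - a i)); nra.
suff : `|t * \sum_(i < N) (2 * ((y i - x i) * (x i - a i)))| <=
   \sum_(i < N) ((y i - x i) ^+ 2 + t ^+ 2 * (x i - a i) ^+ 2).
  by rewrite normrM gtr0_norm.
by rewrite ler_norml h1 andbT; lra.
Qed.

Lemma h_cont (e : R) (a x : pt) (eta : R) : 0 < eta ->
  exists2 rho, 0 < rho & forall y, qd y x < rho ^+ 2 -> `|hdef e a y - hdef e a x| < eta.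
Proof.
move=> eta0.
pose t := eta / (4 * (qd x a + 1)).
have Q2 := qd_ge0 x a.
have t0 : 0 < t by rewrite /t divr_gt0 //; lra.
have tQ : t * qd x a <= eta / 4.
  rewrite /t mulrAC ler_pdivrMr; last lra.
  have -> : eta / 4 * (4 * (qd x a + 1)) = eta * qd x a + eta by field.
  lra.
pose Z := 1 + t^-1 + `|e|.
have Z0 : 0 < Z.
  have := normr_ge0 e; have : 0 < t^-1 by rewrite invr_gt0.
  rewrite /Z; lra.
pose rho := Num.min 1 (eta / (2 * Z)).
have r0 : 0 < rho by rewrite lt_min ltr01 divr_gt0 //; lra.
have r1 : rho <= 1 by rewrite ge_min lexx.
have rZ : rho * Z <= eta / 2.
  have : rho <= eta / (2 * Z) by rewrite ge_min lexx orbT.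
  rewrite ler_pdivlMr; last lra. nra.
exists rho => // y hy.
have Q1 := qd_ge0 y x.
have Q1r : qd y x < rho.
  have : rho ^+ 2 <= rho by rewrite expr2 ger_pMr.
  lra.
have hc := @cross_bound y x a t t0.
set P := \sum_(i < N) _ in hc.
have un := @coord_lt y x ord_max rho r0 hy.
rewrite /hdef (qd_split y x a) -/P.
have -> : qd y x + P + qd x a - e * y ord_max - (qd x a - e * x ord_max)
   = qd y x + P - e * (y ord_max - x ord_max) by ring.
have hP : `|P| <= (qd y x) / t + t * qd x a.
  rewrite -(ler_pM2l t0) mulrDr mulrCA divff ?mulr1 ?gt_eqF //.
  by rewrite mulrA -expr2.
have hQt : qd y x / t <= rho / t by rewrite ler_pM2r ?invr_gt0 // ltW.
have he : `|e * (y ord_max - x ord_max)| <= `|e| * rho.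
  by rewrite normrM ler_wpM2l // ltW.
apply: (le_lt_trans (ler_normB _ _)).
apply: (le_lt_trans (lerD (ler_normD _ _) he)).
rewrite ger0_norm //.
have : rho * Z = rho + rho / t + `|e| * rho by rewrite /Z; ring.
lra.
Qed.


Local Notation LnN := (@Ln R N).
Local Notation PnN := (@Pn R N).
Local Notation XnN := (@Xn R N).

Lemma XnE (x : pt) : XnN x <-> 0 <= x ord_max.
Proof.
rewrite /Xn /Pn /Ln /= le_eqVlt; split.
  by case=> h; apply/orP; [right|left; rewrite eq_sym; apply/eqP].
by case/orP => [/eqP h|h]; [right|left].
Qed.

Lemma In_mem (T : eqType) (s : seq T) (x : T) : List.In x s <-> x \in s.
Proof.
elim: s => [|y s IH] //=; rewrite in_cons; split.
  by case=> [->|/IH ->]; rewrite ?eqxx ?orbT.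
by case/orP => [/eqP ->|/IH]; [left|right].
Qed.

Lemma sq_le (u v : R) : 0 < u -> u <= v -> u ^+ 2 <= v ^+ 2.
Proof. by move=> u0 uv; rewrite ler_pXn2r // ?nnegrE ltW // (lt_le_trans u0). Qed.

Lemma open_ballE (U : set pt) (y : pt) : tau_open LnN U -> U y ->
  exists2 e, 0 < e & forall z, XnN z -> qd z y < e ^+ 2 -> U z.
Proof.
move=> [_ hU] /hU [B [hB BU]].
case: hB => [[_ [e [e0 [_ BE]]]]|[_ [e [e0 BE]]]|[Ly [nA _]]]; last by exfalso; apply: nA.
- rewrite {}BE in BU; exists e => // z _ hz; apply: BU; rewrite /eball /= edist_lt //.
- rewrite {}BE in BU; exists e => // z Xz hz; apply: BU; split => //; rewrite /eball /= edist_lt //.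
Qed.

Definition Kb (a : pt) := [set x : pt | forall i,
  (if i == ord_max then 0 else a i - 1) <= x i <= a i + 1].

Lemma Kb_Xn a : Kb a `<=` XnN.
Proof. by move=> x /(_ ord_max); rewrite eqxx => /andP[h _]; apply/XnE. Qed.

Definition Ub (a : pt) := [set x : pt | XnN x /\ qd x a < 1 / 4].

Lemma Ub_Kb a : Ub a `<=` Kb a.
Proof.
move=> x [/XnE X0 hq] i.
have : `|x i - a i| < 1 / 2.
  by apply: coord_lt => //; rewrite (_ : (1 / 2) ^+ 2 = 1 / 4) //; field.
rewrite ltr_norml => /andP[h1 h2].
case: (eqVneq i ord_max) => [E|ne].
  by rewrite E in h1 h2 *; apply/andP; split; lra.
apply/andP; split; lra.
Qed.

Lemma Ub_open a : tau_open LnN (Ub a).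
Proof.
split; first by move=> x [].
move=> x [Xx hx].
have [rho r0 hr] := @h_cont 0 a x (1 / 4 - qd x a) ltac:(lra).
have key : forall y, qd y x < rho ^+ 2 -> qd y a < 1 / 4.
  move=> y /hr; rewrite /hdef !mul0r !subr0 => h.
  have := ler_norm (qd y a - qd x a); lra.
case: Xx => [Px|Lx].
- have xp : 0 < x ord_max by [].
  pose d := Num.min rho (x ord_max / 2).
  have d0 : 0 < d by rewrite lt_min r0 /=; lra.
  have d1 : d <= rho by rewrite ge_min lexx.
  have d2 : d <= x ord_max / 2 by rewrite ge_min lexx orbT.
  exists (eball x d); split.
    by apply: Or31; split => //; exists d; split => //; split => //; rewrite lastcE; lra.
  move=> y; rewrite /eball /= edist_lt // => hy; split.
    have := @coord_lt y x ord_max d d0 hy; rewrite ltr_norml => /andP[h1 h2].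
    by apply/XnE; lra.
  by apply: key; exact: (lt_le_trans hy (@sq_le d rho d0 d1)).
- exists (eball x rho `&` XnN); split.
    by apply: Or32; split => //; exists rho.
  move=> y [hy Xy]; split => //; apply: key.
  by move: hy; rewrite /eball /= edist_lt.
Qed.


Definition rr (x : pt) : 'rV[R]_N := \row_i x i.

Lemma rowK (v : 'rV[R]_N) : rr (fun i => v ord0 i) = v.
Proof. by apply/rowP => i; rewrite mxE. Qed.

Lemma ball_coord (x y : pt) (d : R) : ball (rr x) d (rr y) -> forall i, `|x i - y i| < d.
Proof.
rewrite mx_norm_ball /ball_ => h i; apply: le_lt_trans h.
have -> : x i - y i = (rr x - rr y) ord0 i by rewrite !mxE.
rewrite [leRHS]/Num.norm /= mx_normrE; apply/bigmax_geP; right => /=.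
by exists (ord0, i).
Qed.

Lemma Kb_compact a : tau_compact LnN (Kb a).
Proof.
split; first exact: Kb_Xn.
move=> C hC hcov.
pose lo i := if i == ord_max then 0 else a i - 1.
pose Kr := [set v : 'rV[R]_N | forall i, `[lo i, a i + 1]%classic (v ord0 i)].
have Krc : compact Kr.
  by apply: (@rV_compact _ _ (fun i => `[lo i, a i + 1]%classic)) => i; exact: segment_compact.
pose PU (U : set pt) := [set p : pt * R | U p.1 /\ 0 < p.2 /\
   forall z, XnN z -> qd z p.1 < (p.2 * N%:R) ^+ 2 -> U z].
pose f (U : set pt) := \bigcup_(p in PU U) ball (rr p.1) p.2.
have : finite_subset_cover C f Kr.
  rewrite compact_cover in Krc; apply: Krc.
    by move=> U _; apply: bigcup_open => p _; apply: ball_open.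
  move=> v Kv; pose z : pt := fun i => v ord0 i.
  have Kz : Kb a z.
    move=> i; have := Kv i; rewrite /= in_itv /= /lo /z //.
  have [U CU Uz] := hcov z Kz.
  have [e e0 he] := @open_ballE U z (hC U CU) Uz.
  exists U => //; exists (z, e / N%:R).
    split => //; split; first by rewrite divr_gt0.
    move=> y Xy; rewrite /= divfK ?pnatr_eq0 //; exact: he.
  by rewrite /= rowK; apply: ballxx; rewrite divr_gt0.
move=> [D' sD cov].
exists (enum_fset D'); split.
  move=> U /In_mem /sD; by rewrite in_setE.
move=> x Kx.
have Kx' : Kr (rr x).
  by move=> i; rewrite mxE /= in_itv /=; exact: Kx.
have [U UD [p [pU [p0 pz]] bp]] := cov _ Kx'.
exists U; first exact/In_mem.
apply: pz; first exact: Kb_Xn.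
have hc := @ball_coord p.1 x p.2 bp.
have : qd x p.1 <= \sum_(i < N) p.2 ^+ 2.
  apply: ler_sum => i _.
  have := hc i; rewrite distrC => /ltW h.
  by rewrite -real_normK ?num_real // ler_pXn2r // ?nnegrE // (le_trans _ h).
rewrite sumr_const card_ord => h; apply: (le_lt_trans h).
rewrite exprMn -[X in X < _]mulr_natr ltr_pM2l ?exprn_gt0 //.
rewrite expr2 -natrM ltr_nat.
by rewrite -{1}[N]muln1 ltn_pmul2l.
Qed.


Lemma qd_eq0 (x a : pt) : qd x a = 0 -> x = a.
Proof.
move=> /eqP; rewrite psumr_eq0 => [/allP h|i _]; last exact: sqr_ge0.
apply/funext => i; apply/eqP; rewrite -subr_eq0 -sqrf_eq0.
by have := h i (mem_index_enum i) => /implyP; apply.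
Qed.

Lemma witness (a : pt) (e h : R) : 0 < h -> h < e ->
  exists y : pt, y ord_max = h /\ qd y a = e * h + (a ord_max) ^+ 2 - 2 * h * a ord_max.
Proof.
move=> h0 he.
pose s := Num.sqrt (e * h - h ^+ 2).
pose y : pt := fun i => if i == ord_max then h else if i == ord0 then a i + s else a i.
exists y; split; first by rewrite /y eqxx.
rewrite /qd (bigD1 ord_max) //= (bigD1 ord0) //=.
rewrite big1; last first.
  move=> i /andP[n0 nm]; rewrite /y (negbTE n0) (negbTE nm) subrr expr0n //.
rewrite /y eqxx /=.
rewrite addr0 (addrC (a ord0)) addrK sqr_sqrtr; last first.
  rewrite subr_ge0 expr2 ler_pM2r //; lra.
ring.
Qed.


Lemma not_lc (A : set pt) (a : pt) : A `<=` LnN -> LnN a -> ~ A a ->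
  tau_locally_compact A -> False.
Proof.
move=> AL La nA lc.
have a0 : a ord_max = 0 := La.
have Xa : XnN a by right.
have [U [K [oU Ua UK [KX Kc]]]] := lc a Xa.
have [B [hB BU]] := oU.2 a Ua.
have [e [e0 BE]] : exists e, 0 < e /\ B = tball a e.
  case: hB => [[Pa _]|[Aa _]|[_ [_ ex]]] //.
  by move: Pa; rewrite /Pn /= a0 ltxx.
pose S := [set x : pt | 0 < x ord_max /\ qd x a = e * x ord_max].
have SK : S `<=` K.
  move=> x [xp hx]; apply: UK; apply: BU; rewrite BE; right.
  apply/eball_shiftE => //; have := mulr_gt0 e0 xp; lra.
pose V (k : nat) := [set x : pt | k.+1%:R^-1 < x ord_max].
pose W := [set x : pt | XnN x /\ ~ S x].
pose C := [set U : set pt | U = W \/ exists k, U = V k].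
have oV k : tau_open A (V k).
  have c0 : 0 < k.+1%:R^-1 :> R by rewrite invr_gt0.
  split.
    by move=> x hx; apply/XnE; apply/ltW; apply: lt_trans hx.
  move=> x hx; have xp : 0 < x ord_max by apply: lt_trans hx.
  pose d := x ord_max - k.+1%:R^-1.
  have d0 : 0 < d by rewrite /d subr_gt0.
  exists (eball x d); split.
    by apply: Or31; split => //; exists d; split => //; split => //; rewrite lastcE /d ltrBlDr ltrDl.
  move=> y; rewrite /eball /= edist_lt // => hy.
  have := @coord_lt y x ord_max d d0 hy; rewrite ltr_norml /d => /andP[h1 h2].
rewrite /V /=; move: h1 h2; set c := k.+1%:R^-1; lra.
have oW : tau_open A W.
  split; first by move=> x [].
  move=> x [Xx nSx].
  case: (eqVneq x a) => [->|xa].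
    have e20 : 0 < e / 2 by rewrite divr_gt0.
    exists (tball a (e / 2)); split.
      by apply: Or33; split => //; split => //; exists (e / 2).
    move=> y [->|]; first by split => // -[]; rewrite a0 ltxx.
    move/eball_shiftE => /(_ a0 e20) hy.
    have Q := qd_ge0 y a.
    have ey : 0 < e * y ord_max.
      have -> : e * y ord_max = 2 * (e / 2) * y ord_max by field.
      lra.
    have yp : 0 < y ord_max by move: ey; rewrite pmulr_rgt0.
    split; first by apply/XnE; apply: ltW.
    case=> _ hq.
    have : 2 * (e / 2) * y ord_max = e * y ord_max by field.
    lra.
  have hx0 : hdef e a x != 0.
    case: Xx => [Px|Lx].
      apply/eqP => h0; apply: nSx; split => //; rewrite /hdef in h0; lra.
    have x0 : x ord_max = 0 := Lx.
    apply/eqP; rewrite /hdef x0 mulr0 subr0 => /qd_eq0 h0.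
    by rewrite h0 eqxx in xa.
  have [rho r0 hr] := @h_cont e a x `|hdef e a x| ltac:(by rewrite normr_gt0).
  have key : forall y, qd y x < rho ^+ 2 -> ~ S y.
    move=> y /hr hy [yp hq].
    have : hdef e a y = 0 by rewrite /hdef hq subrr.
    by move=> h0; move: hy; rewrite h0 sub0r normrN ltxx.
  case: Xx => [Px|Lx].
  - have xp : 0 < x ord_max by [].
    pose d := Num.min rho (x ord_max / 2).
    have d0 : 0 < d by rewrite lt_min r0 /=; lra.
    have d1 : d <= rho by rewrite ge_min lexx.
    have d2 : d <= x ord_max / 2 by rewrite ge_min lexx orbT.
    exists (eball x d); split.
      by apply: Or31; split => //; exists d; split => //; split => //; rewrite lastcE; lra.
    move=> y; rewrite /eball /= edist_lt // => hy; split.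
      have := @coord_lt y x ord_max d d0 hy; rewrite ltr_norml => /andP[h1 h2].
      by apply/XnE; lra.
    by apply: key; exact: (lt_le_trans hy (@sq_le d rho d0 d1)).
  - have x0 : x ord_max = 0 := Lx.
    case: (pselect (A x)) => [Ax|nAx].
      exists (eball x rho `&` XnN); split.
        by apply: Or32; split => //; exists rho.
      move=> y [hy Xy]; split => //; apply: key.
      by move: hy; rewrite /eball /= edist_lt.
    have r20 : 0 < rho / 2 by rewrite divr_gt0.
    exists (tball x (rho / 2)); split.
      by apply: Or33; split => //; split => //; exists (rho / 2).
    move=> y [->|]; first by split => //; right.
    move/eball_shiftE => /(_ x0 r20) hy.
    have := coord_sq y x ord_max; rewrite x0 subr0 => hs.
    have hy' : qd y x < rho * y ord_max.
      have <- : 2 * (rho / 2) * y ord_max = rho * y ord_max by field.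
      exact: hy.
    have yp : 0 < y ord_max.
      rewrite ltNge; apply/negP => yn.
      have := qd_ge0 y x; have : rho * y ord_max <= 0 by rewrite pmulr_rle0.
      lra.
    have yr : y ord_max < rho.
      have : y ord_max ^+ 2 < rho * y ord_max by lra.
      by rewrite expr2 ltr_pM2r.
    split; first by apply/XnE; apply: ltW.
    apply: key; rewrite expr2; apply: (lt_trans hy').
    by rewrite ltr_pM2l.
have cov : forall x, K x -> exists2 U, C U & U x.
  move=> x Kx; case: (pselect (S x)) => [[xp hq]|nS].
    pose k := Num.truncn (x ord_max)^-1.
    have hk : (x ord_max)^-1 < k.+1%:R := truncnS_gt _.
    exists (V k); first by right; exists k.
    rewrite /V /= invf_plt ?posrE // ltr0n.
  by exists W; [left|split => //; apply: KX].
have oC : forall U, C U -> tau_open A U.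
  by move=> U' [->|[k ->]].
have [s [sC scov]] := Kc C oC cov.
have claim : forall s' : seq (set pt), (forall U, List.In U s' -> C U) ->
   exists c, 0 < c /\ forall U, List.In U s' -> forall z, U z -> W z \/ c < z ord_max.
  elim => [|U' s' IH] sC'; first by exists 1.
  have [c [c0 hc]] := IH (fun U'' h => sC' U'' (or_intror h)).
  case: (sC' U' (or_introl erefl)) => [->|[k ->]].
    by exists c; split => // U'' [<-|/hc] //; left.
  have k0 : 0 < k.+1%:R^-1 :> R by rewrite invr_gt0.
  exists (Num.min c (k.+1%:R^-1)); split; first by rewrite lt_min c0.
  move=> U'' [<- z hz|/hc h z /h [|hz]]; [right|by left|right].
    by apply: le_lt_trans hz; rewrite ge_min lexx orbT.
  by apply: le_lt_trans hz; rewrite ge_min lexx.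
have [c [c0 hc]] := claim s sC.
pose h := Num.min c (e / 2).
have h0 : 0 < h by rewrite lt_min c0 divr_gt0.
have he : h < e by rewrite gt_min; apply/orP; right; lra.
have [y [yh yq]] := @witness a e h h0 he.
have Sy : S y by split; rewrite yh // yq a0; ring.
have [U' U's U'y] := scov y (SK y Sy).
case: (hc U' U's y U'y) => [[_ //]|].
by rewrite yh; apply/negP; rewrite -leNgt ge_min lexx.
Qed.

End Aux.

Theorem mainTheorem3 (R : realType) (n : nat) (A : set (pt R n)) :
  (2 <= n)%N -> A `<=` @Ln R n ->
  (tau_locally_compact A <-> A = @Ln R n).
Proof.
case: n A => [|[|m]] A // _ AL; split.
- move=> lc; apply/seteqP; split => // a La; apply: contrapT => nA.
  exact: (@not_lc R m A a AL La nA lc).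
- move=> -> x Xx; exists (@Ub R m x), (@Kb R m x); split.
  + exact: (@Ub_open R m x).
  + split => //; rewrite /qd big1 => [|i _]; last by rewrite subrr expr0n.
    by rewrite divr_gt0.
  + exact: (@Ub_Kb R m x).
  + exact: (@Kb_compact R m x).
Qed.
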